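(* Let $L$ be a finite set of vertical lines and $R$ a finite set of horizontal closed rays in the plane such that, for every horizontal line containing a ray of $R$, the rays of $R$ on that line are exactly one leftward ray and one rightward ray, and these two rays have nonempty intersection (a closed segment, possibly a single point). Let $E$ be the set of these intersection segments (one per horizontal line carrying rays). Let $G$ be the bipartite graph with vertex classes $L$ and $E$ in which $\ell\in L$ and $e\in E$ are adjacent iff $\ell\cap e\neq\emptyset$, and let $m$ be the size of a maximum matching in $G$. Then there exists a minimum-cardinality hitting set $P$ for $L\cup R$ containing $m$ points $p_1,\dots,p_m$ together with pairwise distinct lines $\ell_1,\dots,\ell_m\in L$ and pairwise distinct segments $e_1,\dots,e_m\in E$ such that $p_i\in \ell_i\cap e_i$ for all $i$.
   Context: A hitting set for a family of subsets of the plane is a finite set of points such that every member of the family contains at least one of the points. A leftward (resp. rightward) horizontal ray is a set $\{(t,b):t\le a\}$ (resp. $\{(t,b):t\ge a\}$). *)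

(* Defs.v *)
(* the plane is R * R for an arbitrary real field R
   (this includes the real numbers; the statement is order-theoretic). *)
From HB Require Import structures.
From mathcomp Require Import all_boot all_order all_algebra.
Set Implicit Arguments. Unset Strict Implicit. Unset Printing Implicit Defensive.
Import Order.TTheory GRing.Theory Num.Theory.
Local Open Scope ring_scope.

Section Defs.
Variable R : realFieldType.

Definition point := (R * R)%type.

Definition on_vline (a : R) (p : point) : bool := p.1 == a.

(* A horizontal closed ray is a triple (d, a, b):
   d = false : leftward ray  {(t,b) : t <= a}
   d = true  : rightward ray {(t,b) : t >= a} *)
Definition ray := (bool * R * R)%type.
Definition rdir (r : ray) : bool := r.1.1.
Definition ranchor (r : ray) : R := r.1.2.
Definition rheight (r : ray) : R := r.2.

Definition on_ray (r : ray) (p : point) : bool :=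
  (p.2 == rheight r) &&
  (if rdir r then ranchor r <= p.1 else p.1 <= ranchor r).

Definition good_rays (Rs : seq ray) : Prop :=
  uniq Rs /\
  (forall r, r \in Rs ->
     count (fun r' => (rheight r' == rheight r) && ~~ rdir r') Rs = 1%N /\
     count (fun r' => (rheight r' == rheight r) && rdir r') Rs = 1%N) /\
  (forall rl rr, rl \in Rs -> rr \in Rs -> rheight rl = rheight rr ->
     ~~ rdir rl -> rdir rr -> exists p : point, on_ray rl p && on_ray rr p).

(* The set E of intersection segments: one per horizontal line carrying rays,
   indexed by the height b of that line. *)
Definition seg_heights (Rs : seq ray) : seq R := undup [seq rheight r | r <- Rs].

Definition on_seg (Rs : seq ray) (b : R) (p : point) : Prop :=
  exists rl rr, [/\ rl \in Rs, rr \in Rs, rheight rl = b, rheight rr = b &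
     [&& ~~ rdir rl, rdir rr, on_ray rl p & on_ray rr p]].

Definition adjacent (Rs : seq ray) (a b : R) : Prop :=
  exists p : point, on_vline a p /\ on_seg Rs b p.

Definition is_matching (L : seq R) (Rs : seq ray) (M : seq (R * R)) : Prop :=
  (forall e, e \in M -> [/\ e.1 \in L, e.2 \in seg_heights Rs & adjacent Rs e.1 e.2]) /\
  uniq (unzip1 M) /\ uniq (unzip2 M).

Definition max_matching_size (L : seq R) (Rs : seq ray) (m : nat) : Prop :=
  (exists M, is_matching L Rs M /\ size M = m) /\
  (forall M, is_matching L Rs M -> (size M <= m)%N).

Definition hitting (L : seq R) (Rs : seq ray) (P : seq point) : Prop :=
  (forall a, a \in L -> exists2 p, p \in P & on_vline a p) /\
  (forall r, r \in Rs -> exists2 p, p \in P & on_ray r p).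

Definition min_hitting (L : seq R) (Rs : seq ray) (P : seq point) : Prop :=
  [/\ uniq P, hitting L Rs P &
      forall Q, uniq Q -> hitting L Rs Q -> (size P <= size Q)%N].

End Defs.

(* Main.v *)
Require Import Defs.
From HB Require Import structures.
From mathcomp Require Import all_boot all_order all_algebra.
From mathcomp Require Import zify lra.
From Stdlib Require Import Classical.
Import Order.TTheory GRing.Theory Num.Theory.
Local Open Scope ring_scope.
Set Implicit Arguments. Unset Strict Implicit. Unset Printing Implicit Defensive.

Section Generic.
Variables (T U : eqType).

Lemma uniq_flatten_filter (f : T -> seq U) (p : pred T) s :
  uniq (flatten (map f s)) -> uniq (flatten (map f (filter p s))).
Proof.
elim: s => //= x s IH; rewrite cat_uniq => /and3P[u1 u2 u3].
case: (p x) => /=; last exact: IH.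
rewrite cat_uniq u1 IH //= andbT.
apply: contra u2 => /hasP[y hy1 hy2]; apply/hasP; exists y => //.
move/flatten_mapP: hy1 => [z]; rewrite mem_filter => /andP[_ hz] hyz.
by apply/flatten_mapP; exists z.
Qed.

Lemma uniq_flatten_eq (f : T -> seq U) s g1 g2 x :
  uniq (flatten (map f s)) -> g1 \in s -> g2 \in s -> x \in f g1 -> x \in f g2 -> g1 = g2.
Proof.
elim: s => //= g s IH; rewrite cat_uniq => /and3P[u1 u2 u3].
have H : forall h, h \in s -> x \in f h -> x \in f g -> False.
  move=> h hs h1 h2; move/negP: u2; apply; apply/hasP; exists x => //.
  by apply/flatten_mapP; exists h.
rewrite !inE => /orP[/eqP e1|h1] /orP[/eqP e2|h2] x1 x2.
- by rewrite e1 e2.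
- by case: (H g2) => //; rewrite -e1.
- by case: (H g1) => //; rewrite -e2.
- exact: IH.
Qed.

Lemma count_flatten_le1 (f : T -> seq U) s x :
  uniq (flatten (map f s)) -> (count (fun g => x \in f g) s <= 1)%N.
Proof.
elim: s => //= g s IH; rewrite cat_uniq => /and3P[u1 u2 u3].
case hx: (x \in f g) => /=; last by rewrite add0n IH.
suff -> : count (fun g0 => x \in f g0) s = 0%N by [].
apply/eqP; rewrite -leqn0 leqNgt -has_count; apply: contra u2 => /hasP[h hs hh].
by apply/hasP; exists x => //; apply/flatten_mapP; exists h.
Qed.

Lemma exists_not_in (s t : seq T) : uniq s -> (size t < size s)%N -> exists2 x, x \in s & x \notin t.
Proof.
move=> us lt; case: (boolP (all (mem t) s)) => [/allP al|].
  by have := uniq_leq_size us al; rewrite leqNgt lt.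
by move/allPn => [x hx hn]; exists x.
Qed.

Lemma size_filter_uniq_sub (s t : seq T) (p : pred T) :
  uniq s -> {subset filter p s <= t} -> uniq t -> (count p s <= size t)%N.
Proof.
move=> us sub ut; rewrite -size_filter; apply: uniq_leq_size => //.
exact: filter_uniq.
Qed.

End Generic.

Lemma classic_min (P : nat -> Prop) n : P n -> exists k, P k /\ forall j, P j -> (k <= j)%N.
Proof.
elim/ltn_ind: n => n IH Pn.
case: (classic (exists j, P j /\ (j < n)%N)) => [[j [Pj ljn]]|H].
  exact: IH Pj.
exists n; split=> // j Pj; rewrite leqNgt; apply/negP=> ljn; apply: H; by exists j.
Qed.
Lemma uniq_map_eq (T U : eqType) (f : T -> U) s x y :
  uniq (map f s) -> x \in s -> y \in s -> f x = f y -> x = y.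
Proof.
elim: s => //= z s IH /andP[nz us]; rewrite !inE.
move=> /orP[/eqP->|hx] /orP[/eqP->|hy] // e.
- by move: nz; rewrite e (map_f f hy).
- by move: nz; rewrite -e (map_f f hx).
- exact: IH.
Qed.

Section Abs.
Variable R : realFieldType.
Variables (L E : seq R) (lo hi : R -> R).

Definition gadget := (R * R * R)%type.
Definition gh (g : gadget) := g.1.1.
Definition gu (g : gadget) := g.1.2.
Definition gv (g : gadget) := g.2.
Definition glines (g : gadget) := undup [:: gu g; gv g].
Definition single (g : gadget) := gu g == gv g.
Definition adj a b := [&& a \in L, b \in E, lo b <= a & a <= hi b].
Definition gok (g : gadget) :=
  [&& gh g \in E, gu g \in L, gv g \in L, gu g <= hi (gh g) & lo (gh g) <= gv g].
Definition valid (F : seq gadget) :=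
  [&& all gok F, uniq (map gh F) & uniq (flatten (map glines F))].
Definition nsing (F : seq gadget) := count single F.
Definition singleline (F : seq gadget) a := has (fun g => single g && (gu g == a)) F.
Definition singleheight (F : seq gadget) b := has (fun g => single g && (gh g == b)) F.

Lemma mem_glines x g : (x \in glines g) = (x == gu g) || (x == gv g).
Proof. by rewrite mem_undup !inE. Qed.

Lemma glines_single g : single g -> glines g = [:: gu g].
Proof. by rewrite /single /glines => /eqP <- /=; rewrite inE eqxx. Qed.

Lemma gadgetE g : g = (gh g, gu g, gv g).
Proof. by case: g => [[]]. Qed.

Lemma valid_filter F (p : pred gadget) : valid F -> valid (filter p F).
Proof.
case/and3P=> h1 h2 h3; apply/and3P; split.
- by apply/allP=> g; rewrite mem_filter => /andP[_ /(allP h1)].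
- apply: subseq_uniq h2; apply: map_subseq; exact: filter_subseq.
- exact: uniq_flatten_filter.
Qed.

Lemma valid_gok F g : valid F -> g \in F -> gok g.
Proof. by case/and3P=> /allP h _ _ /h. Qed.

Lemma valid_uniq F : valid F -> uniq F.
Proof. by case/and3P=> _ /map_uniq. Qed.

Lemma valid_line_eq F g1 g2 x : valid F -> g1 \in F -> g2 \in F ->
  x \in glines g1 -> x \in glines g2 -> g1 = g2.
Proof. by case/and3P=> _ _ h; apply: uniq_flatten_eq h. Qed.

Lemma valid_height_eq F g1 g2 : valid F -> g1 \in F -> g2 \in F -> gh g1 = gh g2 -> g1 = g2.
Proof. by case/and3P=> _ h _; apply: uniq_map_eq h. Qed.

Lemma valid_size F : valid F -> uniq E -> (size F <= size E)%N.
Proof.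
case/and3P=> h1 h2 _ _; rewrite -(size_map gh); apply: uniq_leq_size => //.
by move=> b /mapP[g hg ->]; case/and5P: (allP h1 g hg).
Qed.

Lemma gok_adj g : gok g -> single g -> adj (gu g) (gh g).
Proof.
case/and5P=> h1 h2 h3 h4 h5 /eqP e; rewrite /adj h1 h2 h4 /= andbT; by rewrite e.
Qed.

Lemma singlelineP F a : reflect (exists2 g, g \in F & single g /\ gu g = a) (singleline F a).
Proof.
apply: (iffP hasP) => [[g hg /andP[s /eqP e]]|[g hg [s e]]]; exists g => //.
by rewrite s e eqxx.
Qed.

Lemma singleheightP F b : reflect (exists2 g, g \in F & single g /\ gh g = b) (singleheight F b).
Proof.
apply: (iffP hasP) => [[g hg /andP[s /eqP e]]|[g hg [s e]]]; exists g => //.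
by rewrite s e eqxx.
Qed.


Lemma count_split (T : Type) (a p : pred T) (s : seq T) :
  count a s = (count (predI a p) s + count (predI a (predC p)) s)%N.
Proof. elim: s => //= x s ->; case: (a x) (p x) => [] [] /=; lia. Qed.

Lemma count_pred1_uniq (T : eqType) (s : seq T) x : uniq s -> x \in s -> count (pred1 x) s = 1%N.
Proof.
move=> us xs; have := count_uniq_mem x us; rewrite xs => e; rewrite -[RHS]e.
by apply: eq_count => y /=; rewrite eq_sym.
Qed.

Lemma size_filter_rem (T : eqType) (s : seq T) x : uniq s -> x \in s ->
  size (filter (predC1 x) s) = (size s).-1.
Proof.
move=> us xs; rewrite size_filter; have := count_predC (pred1 x) s.
rewrite count_pred1_uniq //; have -> : count (predC (pred1 x)) s = count (predC1 x) s by [].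
lia.
Qed.

Lemma nsing_rem F g : valid F -> g \in F -> single g -> nsing (filter (predC1 g) F) = (nsing F).-1.
Proof.
move=> vF gF sg; rewrite /nsing count_filter [count single F](count_split _ (pred1 g)).
have -> : count (predI single (pred1 g)) F = count (pred1 g) F.
  by apply: eq_count => x /=; case: eqP => [->|]; rewrite ?sg ?andbF.
rewrite count_pred1_uniq //; last exact: valid_uniq.
Qed.

Fixpoint apath (e : R -> R -> bool) (F : seq gadget) (As Bs : seq R) {struct As} : bool :=
  match As, Bs with
  | a :: As', b :: Bs' =>
      e a b && (if As' is a' :: _ then ((b, a', a') \in F) && apath e F As' Bs' else nilp Bs')
  | _, _ => false
  end.

Lemma apath_cons e F As Bs : apath e F As Bs -> exists a As2 b Bs2, As = a :: As2 /\ Bs = b :: Bs2.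
Proof. by case: As Bs => [|a As2] [|b Bs2] //= _; exists a, As2, b, Bs2. Qed.

Lemma apath_mono (e e' : R -> R -> bool) F F' As Bs :
  (forall a b, e a b -> e' a b) -> {subset F <= F'} -> apath e F As Bs -> apath e' F' As Bs.
Proof.
move=> he hF; elim: As Bs => [|a As IH] [|b Bs] //= /andP[h1 h2].
rewrite he //=; case: As IH h2 => [|a' As] IH //= /andP[h3 h4].
rewrite hF //=; exact: IH.
Qed.

Lemma apath_edge e F As Bs b : apath e F As Bs -> b \in Bs -> exists a, e a b.
Proof.
elim: As Bs => [|a As IH] [|b' Bs] //= /andP[h1 h2]; rewrite inE => /orP[/eqP->|hb].
  by exists a.
case: As IH h2 => [|a' As] IH /=; first by move/nilP=> e0; move: hb; rewrite e0.
by case/andP=> _ /IH; apply.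
Qed.

Lemma last_in (s : seq R) : s != [::] -> last 0 s \in s.
Proof. by case: s => // b s _ /=; apply: mem_last. Qed.

Lemma berge F (M : seq (R * R)) : valid F -> uniq (unzip1 M) -> uniq (unzip2 M) -> (nsing F < size M)%N ->
  exists As Bs, [/\ apath (fun a b => (a, b) \in M) F As Bs, ~~ singleline F (head 0 As),
                    ~~ singleheight F (last 0 Bs) & uniq Bs].
Proof.
have [n] := ubnP (size M); elim: n M F => // n IH M F szM vF u1 u2 lt.
have [a0 a0M a0n] : exists2 a0, a0 \in unzip1 M & a0 \notin [seq gu g | g <- F & single g].
  apply: exists_not_in; first exact: u1.
  by rewrite !size_map size_filter.
have nsl : ~~ singleline F a0.
  apply: contra a0n => /singlelineP[g gF [sg <-]]; apply: map_f; by rewrite mem_filter sg.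
case/mapP: a0M => [[a b1]] abM /= ea; subst a.
case: (boolP (singleheight F b1)) => [/singleheightP[g1 g1F [sg1 hg1]]|nsh]; last first.
  by exists [:: a0], [:: b1]; split => //=; rewrite abM.
have g1E : g1 = (b1, gu g1, gu g1).
  by rewrite {1}(gadgetE g1) hg1 -(eqP sg1).
set a1 := gu g1.
set F1 := filter (predC1 g1) F; set M1 := filter (predC1 (a0, b1)) M.
have uM : uniq M by apply: map_uniq u1.
have szM1 : size M1 = (size M).-1 by apply: size_filter_rem.
have nsF1 : nsing F1 = (nsing F).-1 by apply: nsing_rem.
have nsF : (0 < nsing F)%N by rewrite /nsing -has_count; apply/hasP; exists g1.
have szM1' : (size M1 < n)%N.
  by rewrite szM1; move: (size M) (nsing F) szM lt => x y; clear; lia.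
have vF1 : valid F1 by apply: valid_filter.
have u1' : uniq (unzip1 M1) by apply: subseq_uniq u1; apply: map_subseq; apply: filter_subseq.
have u2' : uniq (unzip2 M1) by apply: subseq_uniq u2; apply: map_subseq; apply: filter_subseq.
have lt1 : (nsing F1 < size M1)%N.
  by rewrite nsF1 szM1; move: (size M) (nsing F) lt nsF => x y; clear; lia.
have [As [Bs [pa hn ln uB]]] := IH M1 F1 szM1' vF1 u1' u2' lt1.
have b1B : b1 \notin Bs.
  apply/negP=> /(apath_edge pa) [a]; rewrite mem_filter => /andP[ne aM].
  have e0 := uniq_map_eq u2 aM abM erefl; by move: ne; rewrite /= e0 eqxx.
have [a' [As2 [b' [Bs2 [eA eB]]]]] := apath_cons pa.
have lastB : last 0 Bs \in Bs by apply: last_in; rewrite eB.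
have nshF : ~~ singleheight F (last 0 Bs).
  apply: contra ln => /singleheightP[g gF [sg hg]]; apply/singleheightP; exists g => //.
  rewrite mem_filter gF andbT; apply/eqP=> egg; subst g.
  by move: b1B; rewrite -hg1 hg lastB.
have subF : {subset F1 <= F} by move=> x; rewrite mem_filter => /andP[].
have paM : apath (fun a b => (a, b) \in M) F As Bs.
  apply: apath_mono pa => // a b; by rewrite mem_filter => /andP[].
case: (eqVneq a' a1) => [ea'|na'].
  exists (a0 :: As), (b1 :: Bs); split => //=.
  - rewrite abM /= eA -eA paM andbT ea'; by rewrite -g1E.
  - by move: nshF; rewrite eB /=.
  - by rewrite b1B uB.
exists As, Bs; split => //.
apply: contra hn => /singlelineP[g gF [sg hg]]; apply/singlelineP; exists g => //.
rewrite mem_filter gF andbT; apply/eqP=> egg; subst g.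
by move: na'; rewrite /a1 hg eA /= eqxx.
Qed.

Lemma apath_size e F As Bs : apath e F As Bs -> size As = size Bs.
Proof.
elim: As Bs => [|a As IH] [|b Bs] //= /andP[_].
by case: As IH => [|a' As] IH /=; [move/nilP->|case/andP=> _ /IH <-].
Qed.

Lemma apath_tail e F As Bs x : apath e F As Bs -> x \in behead As ->
  exists2 b, b \in Bs & (b, x, x) \in F.
Proof.
elim: As Bs => [|a As IH] [|b Bs] //= /andP[_].
case: As IH => [|a' As] IH //= /andP[h1 h2]; rewrite inE => /orP[/eqP->|hx].
  by exists b; rewrite ?inE ?eqxx.
have [b' hb' hF] := IH _ h2 hx; exists b' => //; by rewrite inE hb' orbT.
Qed.

Lemma apath_nonlast e F As Bs b : apath e F As Bs -> b \in Bs -> b != last 0 Bs ->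
  singleheight F b.
Proof.
elim: As Bs => [|a As IH] [|b0 Bs] //= /andP[_].
case: As IH => [|a' As] IH /=.
  by move/nilP=> ->; rewrite inE => /eqP ->; rewrite eqxx.
case/andP=> h1 h2; have {}h2 : apath e F (a' :: As) Bs := h2.
rewrite inE => /orP[/eqP->|hb] hl.
  by apply/singleheightP; exists (b0, a', a'); [exact: h1 | rewrite /single /= eqxx].
have [a2 [As2 [b2 [Bs2 [_ eB]]]]] := apath_cons h2.
apply: (IH _ h2 hb); move: hl; by rewrite eB.
Qed.

Lemma apath_edges e F As Bs : apath e F As Bs -> all (fun ab => e ab.1 ab.2) (zip As Bs).
Proof.
elim: As Bs => [|a As IH] [|b Bs] //= /andP[-> /=].
by case: As IH => [|a' As] IH /=; [move/nilP->|case/andP=> _ /IH].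
Qed.

Lemma apath_last e F As Bs : apath e F As Bs -> e (last 0 As) (last 0 Bs).
Proof.
elim: As Bs => [|a As IH] [|b Bs] //= /andP[h].
case: As IH => [|a' As] IH /=; first by move/nilP->.
case/andP=> _ hp; have {}hp : apath e F (a' :: As) Bs := hp.
have [a2 [As2 [b2 [Bs2 [eA eB]]]]] := apath_cons hp.
move: (IH _ hp); rewrite eB /= => h'; exact: h'.
Qed.

Lemma apath_uniq F As Bs e : valid F -> apath e F As Bs -> uniq Bs -> uniq (behead As).
Proof.
move=> vF; elim: As Bs => [|a As IH] [|b Bs] //= /andP[_].
case: As IH => [|a' As] IH //= /andP[h1 h2] /andP[nb uB].
have {}h2 : apath e F (a' :: As) Bs := h2.
have uA : uniq As := IH _ h2 uB.
rewrite uA andbT; apply/negP=> hA; have [b' hb' hF] := apath_tail h2 hA.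
have e0 : (b, a', a') = (b', a', a').
  apply: (valid_line_eq (x := a') vF) => //; by rewrite mem_glines eqxx.
by case: e0 => eb; move: nb; rewrite eb hb'.
Qed.

Definition btw (a l w : R) := ((a <= w) && (w <= l)) || ((l <= w) && (w <= a)).

Lemma apath_ivt F As Bs w : valid F -> apath adj F As Bs -> w \in L ->
  btw (head 0 As) (last 0 As) w ->
  exists As2 Bs2, [/\ apath adj F (w :: As2) Bs2, subseq Bs2 Bs & last 0 Bs2 = last 0 Bs].
Proof.
move=> vF; elim: As Bs => [|a As IH] [|b Bs] //= /andP[hab].
case: As IH => [|a' As] IH /=.
  move/nilP=> -> wL hw; exists [::], [:: b]; split; rewrite /= ?eqxx ?andbT //.
  have ew : w = a by move: hw; rewrite /btw /= => /orP[] /andP[h1 h2]; apply/eqP; rewrite eq_le ?h1 ?h2.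
  by rewrite ew hab.
case/andP=> hF hp wL hw; have {}hp : apath adj F (a' :: As) Bs := hp.
have ga := valid_gok vF hF; case/and5P: ga => ga1 ga2 _ ga4 ga5.
rewrite /gh /gu /gv /= in ga1 ga2 ga4 ga5.
case/and4P: hab => hab1 hab2 hab3 hab4.
case: (boolP (btw a a' w)) => hw1.
  exists (a' :: As), (b :: Bs); split; [| by rewrite eqxx subseq_refl | by []].
  rewrite hF hp !andbT /adj wL hab2 /=.
  by move: hw1; rewrite /btw => /orP[] /andP[h1 h2]; apply/andP; split; lra.
have hw2 : btw a' (last a' As) w.
  move: hw hw1; rewrite /btw /=.
  case: (lerP a w); case: (lerP w a'); case: (lerP w (last a' As)); case: (lerP (last a' As) w);
  rewrite /= ?andbT ?andbF //=; lra.
have [As2 [Bs2 [p2 s2 l2]]] := IH Bs hp wL hw2.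
exists As2, Bs2; split; first exact: p2.
- have h3 : subseq Bs2 (b :: Bs) := subseq_trans s2 (subseq_cons Bs b).
  exact: h3.
- have [a3 [As3 [b3 [Bs3 [_ eB]]]]] := apath_cons hp.
  by rewrite l2 eB.
Qed.

Hypothesis hlohi : forall b, b \in E -> lo b <= hi b.

Lemma uniq_cat_intro (T : eqType) (s1 s2 : seq T) : uniq s1 -> uniq s2 ->
  (forall x, x \in s1 -> x \in s2 -> False) -> uniq (s1 ++ s2).
Proof.
move=> u1 u2 d; rewrite cat_uniq u1 u2 andbT /=; apply/hasPn => x x2; apply/negP => x1.
exact: (d x).
Qed.

Lemma count_predU_le (T : Type) (a b : pred T) s : (count (predU a b) s <= count a s + count b s)%N.
Proof. have := count_predUI a b s; lia. Qed.

Lemma count_heights F (t : seq R) : valid F -> (count (fun g => gh g \in t) F <= size t)%N.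
Proof.
move=> vF; rewrite -size_filter -(size_map gh); apply: uniq_leq_size.
  case/and3P: vF => _ u _; apply: subseq_uniq u; apply: map_subseq; exact: filter_subseq.
by move=> b /mapP[g]; rewrite mem_filter => /andP[h _] ->.
Qed.

Lemma norm_step F g w : valid F -> g \in F -> ~~ single g -> w \in glines g -> adj w (gh g) ->
  exists F', [/\ valid F', size F' = size F & nsing F' = (nsing F).+1].
Proof.
move=> vF gF ng wg hadj; exists ((gh g, w, w) :: filter (predC1 g) F).
have vK := valid_filter (predC1 g) vF.
case/and3P: (vK) => k1 k2 k3.
split.
- apply/and3P; split.
  + rewrite /= k1 andbT; case/and4P: hadj => h1 h2 h3 h4.
    by rewrite /gok /gh /gu /gv /= h1 h2 h3 h4.
  + rewrite /= k2 andbT; apply/mapP => [[g' g'F e]].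
    move: g'F; rewrite mem_filter => /andP[ne g'F].
    by move: ne; rewrite /= (valid_height_eq vF g'F gF (esym e)) eqxx.
  + have gl : glines (gh g, w, w) = [:: w] by rewrite /glines /= inE eqxx.
    rewrite /= gl; apply: uniq_cat_intro => // x; rewrite inE => /eqP -> {x}.
    move/flatten_mapP => [g' g'F xg'].
    move: g'F; rewrite mem_filter => /andP[ne g'F].
    by move: ne; rewrite /= (valid_line_eq vF g'F gF xg' wg) eqxx.
- rewrite /= size_filter_rem //; last exact: valid_uniq.
  by case: (F) gF.
- have e1 : single (gh g, w, w) by rewrite /single /gu /gv /=.
  rewrite /nsing /= e1 add1n count_filter; congr S.
  apply: eq_count => x /=; case: (eqVneq x g) => [->|]; by rewrite ?(negbTE ng) ?andbT ?andbF.
Qed.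

Definition NS (As Bs : seq R) : seq gadget := [seq (ab.2, ab.1, ab.1) | ab <- zip As Bs].

Lemma NS_heights As Bs : size As = size Bs -> map gh (NS As Bs) = Bs.
Proof. by move=> e; rewrite -map_comp; apply: unzip2_zip; rewrite e. Qed.

Lemma NS_lines As Bs : size As = size Bs -> flatten (map glines (NS As Bs)) = As.
Proof.
move=> e.
have -> : [seq glines x | x <- NS As Bs] = [seq [:: ab.1] | ab <- zip As Bs].
  by rewrite /NS -map_comp; apply: eq_map => ab; rewrite /= /glines /= inE eqxx.
by rewrite flatten_map1; apply: unzip1_zip; rewrite e.
Qed.

Lemma NS_nsing As Bs : size As = size Bs -> nsing (NS As Bs) = size As.
Proof.
move=> e; rewrite /nsing count_map (eq_count (a2 := predT)); last by move=> ab; rewrite /= /single eqxx.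
by rewrite count_predT size_zip e minnn.
Qed.

Lemma mk_single b a : single (b, a, a) /\ gu (b, a, a) = a.
Proof. by rewrite /single /gu /gv /= eqxx. Qed.

Definition keep (As Bs : seq R) (g : gadget) := (gh g \notin Bs) && (head 0 As \notin glines g).

Lemma exch F As Bs R0 :
  valid F -> apath adj F As Bs -> uniq Bs ->
  ~~ singleline F (head 0 As) -> ~~ singleheight F (last 0 Bs) ->
  valid R0 ->
  (forall g, g \in R0 -> (gh g \notin Bs) /\ (forall g', g' \in F -> keep As Bs g' -> gh g' != gh g)) ->
  (forall x g, g \in R0 -> x \in glines g ->
      (x \notin As) /\ (forall g', g' \in F -> keep As Bs g' -> x \notin glines g')) ->
  (count (predC (keep As Bs)) F <= size As + size R0)%N ->
  exists F', [/\ valid F', (size F <= size F')%N & (nsing F < nsing F')%N].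
Proof.
move=> vF pa uB nsl nsh vR hR lR cnt.
have eS := apath_size pa.
have [a0 [As1 [b0 [Bs1 [eA eB]]]]] := apath_cons pa.
set K := filter (keep As Bs) F.
have vK : valid K by apply: valid_filter.
case/and3P: (vK) => k1 k2 k3.
case/and3P: (vR) => r1 r2 r3.
exists (K ++ NS As Bs ++ R0); split.
- apply/and3P; split.
  + rewrite !all_cat k1 r1 /= andbT; rewrite /NS all_map.
    apply: sub_all (apath_edges pa) => ab /= /and4P[h1 h2 h3 h4].
    by rewrite /gok /gh /gu /gv /= h1 h2 h3 h4.
  + rewrite !map_cat NS_heights //; apply: uniq_cat_intro => //.
      apply: uniq_cat_intro => // b bB /mapP[g gR eb]; subst b.
      by have [h _] := hR g gR; rewrite bB in h.
    move=> b /mapP[g]; rewrite mem_filter => /andP[kg gF] ->.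
    rewrite mem_cat => /orP[hb|/mapP[g0 g0R e0]].
      by move: kg; rewrite /keep hb.
    by have [_ h] := hR g0 g0R; move: (h g gF kg); rewrite e0 eqxx.
  + rewrite !map_cat !flatten_cat NS_lines //.
    have uA : uniq As.
      rewrite eA /=; apply/andP; split; last by have := apath_uniq vF pa uB; rewrite eA.
      apply/negP=> ha; have hA : a0 \in behead As by rewrite eA.
      have [b hb hF] := apath_tail pa hA.
      move/negP: nsl; apply; rewrite eA /=; apply/singlelineP; exists (b, a0, a0) => //.
      exact: mk_single.
    apply: uniq_cat_intro; first exact: k3.
      apply: uniq_cat_intro; [exact: uA | exact: r3 | move=> x xA /flatten_mapP[g gR xg]].
      by have [h _] := lR x g gR xg; rewrite xA in h.
    move=> x /flatten_mapP[g]; rewrite mem_filter => /andP[kg gF] xg.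
    rewrite mem_cat => /orP[xA|/flatten_mapP[g0 g0R xg0]]; last first.
      by have [_ h] := lR x g0 g0R xg0; move: (h g gF kg); rewrite xg.
    move: xA; rewrite eA inE => /orP[/eqP ex|xA1].
      by move: kg; rewrite /keep eA /= -ex xg andbF.
    have hA : x \in behead As by rewrite eA.
    have [b hb hF] := apath_tail pa hA.
    have eg : g = (b, x, x).
      apply: (valid_line_eq (x := x) vF gF hF xg); by rewrite mem_glines eqxx.
    by move: kg; rewrite /keep eg /gh /= hb.
- rewrite !size_cat size_filter /NS size_map size_zip -eS minnn.
  have := count_predC (keep As Bs) F; move: cnt.
  move: (count _ F) (count _ F) (size F) (size As) (size R0) => x y z u v; clear; lia.
- rewrite /nsing !count_cat -/(nsing (NS As Bs)) NS_nsing // count_filter.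
  rewrite [count single F](count_split _ (keep As Bs)).
  suff : (count (predI single (predC (keep As Bs))) F < size As)%N.
    move: (count _ F) (count _ F) (size As) (count _ R0) => x y z u; clear; lia.
  have lB : last 0 Bs \in Bs by apply: last_in; rewrite eB.
  rewrite -size_filter -(size_map gh).
  apply: (@leq_trans (size (filter (predC1 (last 0 Bs)) Bs)).+1).
    rewrite ltnS; apply: uniq_leq_size.
      case/and3P: vF => _ u _; apply: subseq_uniq u; apply: map_subseq; exact: filter_subseq.
    move=> b /mapP[g]; rewrite mem_filter => /andP[/andP[sg nk] gF] ->.
    have ghB : gh g \in Bs.
      move: nk; rewrite /= /keep negb_and !negbK => /orP[//|].
      rewrite glines_single // inE => /eqP e; case/negP: nsl; apply/singlelineP.
      by exists g.
    rewrite mem_filter ghB andbT /=; apply/eqP => e; case/negP: nsh.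
    by apply/singleheightP; exists g.
  by rewrite size_filter_rem // eS eB /=.
Qed.

Lemma valid_nil : valid [::].
Proof. by []. Qed.

Lemma improve_easy F As Bs : valid F -> apath adj F As Bs -> uniq Bs ->
  ~~ singleline F (head 0 As) -> ~~ singleheight F (last 0 Bs) ->
  (forall g, g \in F -> head 0 As \in glines g -> gh g \in Bs) ->
  exists F', [/\ valid F', (size F <= size F')%N & (nsing F < nsing F')%N].
Proof.
move=> vF pa uB nsl nsh hin.
apply: (exch (As := As) (Bs := Bs) (R0 := [::])) => //.
rewrite /= addn0 (apath_size pa).
rewrite (eq_in_count (a2 := fun g => gh g \in Bs)); first exact: count_heights.
move=> g gF /=; rewrite /keep negb_and !negbK.
by case: (boolP (head 0 As \in glines g)) => h; rewrite ?orbF // orbT (hin g gF h).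
Qed.

Lemma repair F As Bs gc gj g0 : valid F -> apath adj F As Bs -> uniq Bs ->
  ~~ singleline F (head 0 As) -> ~~ singleheight F (last 0 Bs) ->
  gc \in F -> head 0 As \in glines gc -> gh gc \notin Bs ->
  gj \in F -> gh gj = last 0 Bs -> ~~ single gc -> ~~ single gj ->
  gh g0 = gh gc -> gok g0 ->
  (forall x, x \in glines g0 -> (x \in glines gj) || ((x \in glines gc) && (x != head 0 As))) ->
  exists F', [/\ valid F', (size F <= size F')%N & (nsing F < nsing F')%N].
Proof.
move=> vF pa uB nsl nsh gcF a0c hcB gjF ej ngc ngj e0 ok0 l0.
have [a0 [As1 [b0 [Bs1 [eA eB]]]]] := apath_cons pa.
have lB : last 0 Bs \in Bs by apply: last_in; rewrite eB.
have a0c' : a0 \in glines gc by move: a0c; rewrite eA.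
have ngk : forall g, g \in F -> keep As Bs g -> g != gc /\ g != gj.
  move=> g gF; rewrite /keep => /andP[h1 h2]; split; apply/eqP => eg; subst g.
    by rewrite a0c in h2.
  by rewrite ej lB in h1.
have nsA : forall x g, g \in F -> ~~ single g -> x \in glines g -> x \in behead As -> False.
  move=> x g gF sg xg xA; have [b hb hF] := apath_tail pa xA.
  have eg : g = (b, x, x).
    apply: (valid_line_eq (x := x) vF gF hF xg); by rewrite mem_glines eqxx.
  by move: sg; rewrite eg /single /gu /gv /= eqxx.
apply: (exch (As := As) (Bs := Bs) (R0 := [:: g0])) => //.
- by rewrite /valid /= ok0 /= cats0 /glines undup_uniq.
- move=> g; rewrite inE => /eqP -> {g}; rewrite e0; split => // g' g'F kg.
  apply/negP => /eqP e1; have [h _] := ngk g' g'F kg.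
  by rewrite (valid_height_eq vF g'F gcF e1) eqxx in h.
- move=> x g; rewrite inE => /eqP -> {g} xg; have := l0 x xg.
  case/orP=> [xj|/andP[xc xa]]; split.
  + rewrite eA inE negb_or; apply/andP; split.
      apply/eqP => ex; subst x; have egc := valid_line_eq vF gjF gcF xj a0c'.
      by move: hcB; rewrite -egc ej lB.
    by apply/negP => xA; apply: (nsA x gj) => //; rewrite eA.
  + move=> g' g'F kg; apply/negP => xg'; have [_ h] := ngk g' g'F kg.
    by rewrite (valid_line_eq vF g'F gjF xg' xj) eqxx in h.
  + rewrite eA inE negb_or; apply/andP; split.
      by move: xa; rewrite eA.
    by apply/negP => xA; apply: (nsA x gc) => //; rewrite eA.
  + move=> g' g'F kg; apply/negP => xg'; have [h _] := ngk g' g'F kg.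
    by rewrite (valid_line_eq vF g'F gcF xg' xc) eqxx in h.
- apply: (@leq_trans (count (fun g => gh g \in Bs) F + count (fun g => head 0 As \in glines g) F)).
    apply: leq_trans (count_predU_le _ _ _); apply: sub_count => g /=.
    by rewrite /keep negb_and !negbK.
  have h1 := count_heights Bs vF.
  have h2 : (count (fun g => head 0%R As \in glines g) F <= 1)%N.
    by apply: count_flatten_le1; case/and3P: vF.
  rewrite (apath_size pa) /=; move: h1 h2.
  move: (count _ F) (count _ F) (size Bs) => p q r; clear; lia.
Qed.

Lemma shortcut F As Bs gj w : valid F -> apath adj F As Bs -> uniq Bs ->
  ~~ singleheight F (last 0 Bs) ->
  gj \in F -> gh gj = last 0 Bs -> ~~ single gj -> w \in glines gj ->
  btw (head 0 As) (last 0 As) w ->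
  exists F', [/\ valid F', (size F <= size F')%N & (nsing F < nsing F')%N].
Proof.
move=> vF pa uB nsh gjF ej ngj wj hw.
have wL : w \in L.
  case/and5P: (valid_gok vF gjF) => _ h1 h2 _ _; by move: wj; rewrite mem_glines => /orP[]/eqP->.
have [As2 [Bs2 [p2 s2 l2]]] := apath_ivt vF pa wL hw.
have [a3 [As3 [b3 [Bs3 [eA eB]]]]] := apath_cons p2.
apply: (improve_easy vF p2).
- exact: subseq_uniq s2 uB.
- apply/negP => /singlelineP [g gF [sg eg]].
  have gw : w \in glines g by rewrite mem_glines eg eqxx.
  have egj := valid_line_eq vF gF gjF gw wj; by move: ngj; rewrite -egj sg.
- by rewrite l2.
- move=> g gF /= gw; rewrite (valid_line_eq vF gF gjF gw wj) ej -l2.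
  by apply: last_in; rewrite eB.
Qed.

Lemma improve_path F As Bs : valid F ->
  (forall g, g \in F -> ~~ single g -> (gu g < lo (gh g)) && (hi (gh g) < gv g)) ->
  apath adj F As Bs -> uniq Bs ->
  ~~ singleline F (head 0 As) -> ~~ singleheight F (last 0 Bs) ->
  exists F', [/\ valid F', (size F <= size F')%N & (nsing F < nsing F')%N].
Proof.
move=> vF hnorm pa uB nsl nsh.
have [a0 [As1 [b0 [Bs1 [eA eB]]]]] := apath_cons pa.
have lB : last 0 Bs \in Bs by apply: last_in; rewrite eB.
case: (boolP (has (fun g => head 0 As \in glines g) F)) => [/hasP[gc gcF a0c]|/hasPn none]; last first.
  apply: (improve_easy (As := As) (Bs := Bs)) => // g gF h; by move: (none g gF); rewrite h.
case: (boolP (gh gc \in Bs)) => hcB.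
  apply: (improve_easy (As := As) (Bs := Bs)) => // g gF h; by rewrite (valid_line_eq vF gF gcF h a0c).
have ngc : ~~ single gc.
  apply/negP => sc; case/negP: nsl; apply/singlelineP; exists gc => //; split => //.
  by move: a0c; rewrite glines_single // inE => /eqP.
have okc := valid_gok vF gcF; case/and5P: (okc) => cE cuL cvL cu cv.
have hl := hlohi cE.
case/andP: (hnorm gc gcF ngc) => xc yc.
case: (boolP (last 0 Bs \in map gh F)) => [/mapP[gj gjF ej]|nbj]; last first.
  apply: (exch (As := As) (Bs := Bs) (R0 := [::])) => //.
  set t := filter (predC1 (last 0 Bs)) Bs.
  rewrite (eq_in_count (a2 := predU (fun g => gh g \in t) (fun g => head 0 As \in glines g))).
    apply: leq_trans (count_predU_le _ _ _) _.
    have h1 := count_heights t vF.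
    have h2 : (count (fun g => head 0%R As \in glines g) F <= 1)%N.
      by apply: count_flatten_le1; case/and3P: vF.
    have h3 : size t = (size Bs).-1 by apply: size_filter_rem.
    have h4 : (0 < size Bs)%N by rewrite eB.
    rewrite /= addn0 (apath_size pa); move: h1 h2 h3 h4.
    move: (count _ F) (count _ F) (size t) (size Bs) => p q r z; clear; lia.
  move=> g gF /=; rewrite /keep negb_and !negbK /t mem_filter /=.
  case: (eqVneq (gh g) (last 0 Bs)) => [e|] //=.
  by move: nbj; rewrite -e map_f.
have ngj : ~~ single gj.
  apply/negP => sj; case/negP: nsh; apply/singleheightP; by exists gj.
have okj := valid_gok vF gjF; case/and5P: (okj) => jE juL jvL ju jv.
case/andP: (hnorm gj gjF ngj) => xj yj.
have /and4P[_ _ la1 la2] := apath_last pa.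
rewrite ej in la1 la2.
have gjl : forall x, (x == gu gj) || (x == gv gj) -> x \in glines gj by move=> x; rewrite mem_glines.
have gcl : forall x, (x == gu gc) || (x == gv gc) -> x \in glines gc by move=> x; rewrite mem_glines.
move: (a0c); rewrite mem_glines => /orP[/eqP a0u | /eqP a0v].
- case: (lerP (gu gj) (hi (gh gc))) => hu.
    apply: (repair (As := As) (Bs := Bs) (gc := gc) (gj := gj) (g0 := (gh gc, gu gj, gv gc))) => //.
      by rewrite /gok /gh /gu /gv /= cE juL cvL hu cv.
    move=> x; rewrite mem_glines /gu /gv /= => /orP[/eqP->|/eqP->].
      by rewrite mem_glines eqxx.
    apply/orP; right; apply/andP; split; first by rewrite mem_glines eqxx orbT.
    by rewrite a0u eq_sym; exact: ngc.
  apply: (shortcut (As := As) (Bs := Bs) (gj := gj) (w := gu gj)) => //.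
    by rewrite mem_glines eqxx.
  rewrite /btw a0u; apply/orP; left; apply/andP; split; lra.
- case: (lerP (lo (gh gc)) (gv gj)) => hv.
    apply: (repair (As := As) (Bs := Bs) (gc := gc) (gj := gj) (g0 := (gh gc, gu gc, gv gj))) => //.
      by rewrite /gok /gh /gu /gv /= cE cuL jvL cu hv.
    move=> x; rewrite mem_glines /gu /gv /= => /orP[/eqP->|/eqP->].
      apply/orP; right; apply/andP; split; first by rewrite mem_glines eqxx.
      by rewrite a0v; exact: ngc.
    by rewrite mem_glines eqxx orbT.
  apply: (shortcut (As := As) (Bs := Bs) (gj := gj) (w := gv gj)) => //.
    by rewrite mem_glines eqxx orbT.
  rewrite /btw a0v; apply/orP; right; apply/andP; split; lra.
Qed.

Lemma improve F (M : seq (R * R)) : valid F -> (forall ab, ab \in M -> adj ab.1 ab.2) ->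
  uniq (unzip1 M) -> uniq (unzip2 M) -> (nsing F < size M)%N ->
  exists F', [/\ valid F', (size F <= size F')%N & (size F + nsing F < size F' + nsing F')%N].
Proof.
move=> vF hM u1 u2 lt.
case: (boolP (all (fun g => single g || ((gu g < lo (gh g)) && (hi (gh g) < gv g))) F)) =>
  [/allP hn|/allPn[g gF]].
  have hnorm : forall g, g \in F -> ~~ single g -> (gu g < lo (gh g)) && (hi (gh g) < gv g).
    by move=> g gF ns; move: (hn g gF); rewrite (negbTE ns).
  have [As [Bs [pa nsl nsh uB]]] := berge vF u1 u2 lt.
  have pa' : apath adj F As Bs.
    apply: (apath_mono _ _ pa) => //; by move=> a b /hM.
  have [F' [v' s' n']] := improve_path vF hnorm pa' uB nsl nsh.
  exists F'; split => //; move: s' n'.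
  move: (size F) (size F') (nsing F) (nsing F') => p q r z; clear; lia.
rewrite negb_or => /andP[ns].
have /and5P[gE guL gvL hgu hgv] := valid_gok vF gF.
rewrite negb_and -!leNgt => /orP[h|h].
  have wg : gu g \in glines g by rewrite mem_glines eqxx.
  have ad : adj (gu g) (gh g) by rewrite /adj guL gE h hgu.
  have [F' [v' s' n']] := norm_step vF gF ns wg ad.
  exists F'; split => //; first by rewrite s'.
  by rewrite s' n' addnS.
have wg : gv g \in glines g by rewrite mem_glines eqxx orbT.
have ad : adj (gv g) (gh g) by rewrite /adj gvL gE h hgv.
have [F' [v' s' n']] := norm_step vF gF ns wg ad.
exists F'; split => //; first by rewrite s'.
by rewrite s' n' addnS.
Qed.

Lemma improve_all F (M : seq (R * R)) : uniq E -> valid F ->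
  (forall ab, ab \in M -> adj ab.1 ab.2) -> uniq (unzip1 M) -> uniq (unzip2 M) ->
  exists F', [/\ valid F', (size F <= size F')%N & (size M <= nsing F')%N].
Proof.
move=> uE vF hM u1 u2.
have [n] := ubnP (2 * size E - (size F + nsing F))%N.
elim: n F vF => // n IH F vF lt.
case: (leqP (size M) (nsing F)) => h; first by exists F.
have [F1 [v1 s1 w1]] := improve vF hM u1 u2 h.
have b1 := valid_size v1 uE.
have b2 : (nsing F1 <= size F1)%N by apply: count_size.
have lt1 : (2 * size E - (size F1 + nsing F1) < n)%N.
  move: lt b1 b2 w1; move: (size F) (nsing F) (size F1) (nsing F1) (size E) => p q r z t.
  clear; lia.
have [F2 [v2 s2 m2]] := IH F1 v1 lt1.
exists F2; split => //; exact: leq_trans s1 s2.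
Qed.

Hypothesis hLu : uniq L.
Hypothesis hEu : uniq E.

Definition hitA (Q : seq (R * R)) :=
  (forall a, a \in L -> exists2 p, p \in Q & p.1 = a) /\
  (forall b, b \in E -> (exists2 p, p \in Q & (p.2 == b) && (p.1 <= hi b)) /\
                        (exists2 p, p \in Q & (p.2 == b) && (lo b <= p.1))).

Lemma uniq_flatten_key (T U : eqType) (s : seq T) (f : T -> seq U) (key : U -> T) :
  uniq s -> (forall t, t \in s -> uniq (f t)) ->
  (forall t x, t \in s -> x \in f t -> key x = t) -> uniq (flatten (map f s)).
Proof.
elim: s => //= t s IH /andP[ts us] hu hk; apply: uniq_cat_intro.
- by apply: hu; rewrite inE eqxx.
- apply: IH => // [t' t's|t' x t's xf]; first by apply: hu; rewrite inE t's orbT.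
  by apply: hk => //; rewrite inE t's orbT.
- move=> x xt /flatten_mapP[t' t's xt'].
  have e1 := hk t x (mem_head _ _) xt.
  have t's' : t' \in t :: s by rewrite inE t's orbT.
  have e2 := hk t' x t's' xt'.
  by move: ts; rewrite -e1 e2 t's.
Qed.

Lemma lower (Q : seq (R * R)) : uniq Q -> hitA Q ->
  exists F, valid F /\ (size L + size E <= size Q + size F)%N.
Proof.
move=> uQ [hl hr].
pose pa a := nth (0, 0) Q (find (fun p : R * R => p.1 == a) Q).
have paP : forall a, a \in L -> pa a \in Q /\ (pa a).1 = a.
  move=> a aL; have [p pQ e] := hl a aL.
  have hs : has (fun p : R * R => p.1 == a) Q by apply/hasP; exists p => //; rewrite e.
  split; first by apply: mem_nth; rewrite -has_find.
  by apply/eqP; apply: (nth_find (0, 0) hs).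
pose cl b := fun a => ((pa a).2 == b) && ((pa a).1 <= hi b).
pose cr b := fun a => ((pa a).2 == b) && (lo b <= (pa a).1).
pose ok b := has (cl b) L && has (cr b) L.
pose xl b := nth 0 L (find (cl b) L).
pose xr b := nth 0 L (find (cr b) L).
pose Eg := filter ok E.
pose mk b : gadget := (b, xl b, xr b).
have xlP : forall b, ok b -> xl b \in L /\ cl b (xl b).
  move=> b /andP[h _]; split; first by apply: mem_nth; rewrite -has_find.
  exact: nth_find.
have xrP : forall b, ok b -> xr b \in L /\ cr b (xr b).
  move=> b /andP[_ h]; split; first by apply: mem_nth; rewrite -has_find.
  exact: nth_find.
exists (map mk Eg); split.
  apply/and3P; split.
  - apply/allP => g /mapP[b]; rewrite mem_filter => /andP[okb bE] ->.
    have [xL /andP[_ h1]] := xlP b okb; have [yL /andP[_ h2]] := xrP b okb.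
    rewrite (paP _ xL).2 in h1; rewrite (paP _ yL).2 in h2.
    by rewrite /gok /gh /gu /gv /= bE xL yL h1 h2.
  - rewrite -map_comp (@eq_map _ _ (gh \o mk) id) // map_id; exact: filter_uniq.
  - rewrite -map_comp; apply: (uniq_flatten_key (key := fun x => (pa x).2)).
    + exact: filter_uniq.
    + by move=> t _; exact: undup_uniq.
    + move=> b x; rewrite mem_filter => /andP[okb bE] /=; rewrite mem_glines /gu /gv /=.
      have [xL /andP[/eqP h1 _]] := xlP b okb; have [yL /andP[/eqP h2 _]] := xrP b okb.
      by case/orP => /eqP ->.
pose E' := filter (predC ok) E.
pose qc b := fun p : R * R => (p.2 == b) && (p \notin map pa L).
pose qb b := nth (0, 0) Q (find (qc b) Q).
have qbP : forall b, b \in E' -> qb b \in Q /\ qc b (qb b).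
  move=> b; rewrite mem_filter => /andP[nok bE].
  have hs : has (qc b) Q.
    have [[p1 p1Q h1] [p2 p2Q h2]] := hr b bE.
    move: nok; rewrite /= /ok negb_and => /orP[] nh.
      apply/hasP; exists p1 => //; rewrite /qc; case/andP: (h1) => -> _ /=.
      apply/negP => /mapP[a aL ea]; case/negP: nh; apply/hasP; exists a => //.
      by rewrite /cl -ea h1.
    apply/hasP; exists p2 => //; rewrite /qc; case/andP: (h2) => -> _ /=.
    apply/negP => /mapP[a aL ea]; case/negP: nh; apply/hasP; exists a => //.
    by rewrite /cr -ea h2.
  split; first by apply: mem_nth; rewrite -has_find.
  exact: nth_find.
pose X := map pa L ++ map qb E'.
have uX : uniq X.
  apply: uniq_cat_intro.
  - rewrite map_inj_in_uniq // => a1 a2 h1 h2 e.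
    by rewrite -(paP a1 h1).2 -(paP a2 h2).2 e.
  - rewrite map_inj_in_uniq; first exact: filter_uniq.
    move=> b1 b2 h1 h2 e.
    have /andP[/eqP e1 _] := (qbP b1 h1).2; have /andP[/eqP e2 _] := (qbP b2 h2).2.
    by rewrite -e1 -e2 e.
  - move=> x xL /mapP[b bE' ex]; have /andP[_ h] := (qbP b bE').2.
    by move: h; rewrite -ex xL.
have sX : {subset X <= Q}.
  move=> x; rewrite mem_cat => /orP[/mapP[a aL ->]|/mapP[b bE' ->]].
    exact: (paP a aL).1.
  exact: (qbP b bE').1.
have := uniq_leq_size uX sX; rewrite size_cat !size_map !size_filter.
have := count_predC ok E.
move: (count ok E) (count (predC ok) E) (size L) (size E) (size Q) => p q r z t; clear; lia.
Qed.

Lemma size_flatten_map2 (T U V : Type) (f : T -> seq U) (h : T -> U -> V) s :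
  size (flatten [seq [seq h g x | x <- f g] | g <- s]) = size (flatten (map f s)).
Proof. by elim: s => //= g s IH; rewrite !size_cat size_map IH. Qed.

Lemma count_mem_sub (T : eqType) (s t : seq T) : uniq s -> uniq t -> {subset t <= s} ->
  (count (predC (mem t)) s + size t = size s)%N.
Proof.
move=> us ut hsub; have := count_predC (mem t) s.
have -> : count (mem t) s = size t; last by lia.
rewrite -size_filter; apply: perm_size; apply: uniq_perm; first exact: filter_uniq.
  exact: ut.
move=> x; rewrite mem_filter; apply/andP/idP => [[]//|h]; split => //; exact: hsub.
Qed.

Lemma upper F : valid F -> exists P : seq (R * R),
  [/\ uniq P, hitA P, (size P + size F <= size L + size E)%N &
      forall g, g \in F -> single g -> (gu g, gh g) \in P].
Proof.
move=> vF; case/and3P: (vF) => aok uh ul.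
pose used := flatten (map glines F).
pose PF := flatten [seq [seq (x, gh g) | x <- glines g] | g <- F].
pose PL : seq (R * R) := [seq (a, 0) | a <- L & a \notin used].
pose PE := [seq (lo b, b) | b <- E & b \notin map gh F].
have inPF : forall g x, g \in F -> x \in glines g -> (x, gh g) \in PF.
  move=> g x gF xg; apply/flatten_mapP; exists g => //; exact: map_f.
exists (undup (PF ++ PL ++ PE)); split.
- exact: undup_uniq.
- split.
    move=> a aL; case: (boolP (a \in used)) => [/flatten_mapP[g gF ag]|na].
      by exists (a, gh g); rewrite // mem_undup mem_cat inPF.
    exists (a, 0%R) => //; rewrite mem_undup !mem_cat; apply/orP; right; apply/orP; left.
    by apply: map_f; rewrite mem_filter na.
  move=> b bE; case: (boolP (b \in map gh F)) => [/mapP[g gF ->]|nb].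
    have /and5P[_ _ _ h1 h2] := allP aok g gF.
    split.
      exists (gu g, gh g); first by rewrite mem_undup mem_cat inPF // mem_glines eqxx.
      by rewrite /= eqxx h1.
    exists (gv g, gh g); first by rewrite mem_undup mem_cat inPF // mem_glines eqxx orbT.
    by rewrite /= eqxx h2.
  have pE : (lo b, b) \in undup (PF ++ PL ++ PE).
    rewrite mem_undup !mem_cat; apply/orP; right; apply/orP; right.
    by apply: map_f; rewrite mem_filter nb.
  by split; exists (lo b, b) => //=; rewrite eqxx ?hlohi ?lexx.
- apply: (@leq_trans (size (PF ++ PL ++ PE) + size F)); first by rewrite leq_add2r size_undup.
  have usedL : {subset used <= L}.
    move=> x /flatten_mapP[g gF]; have /and5P[_ h1 h2 _ _] := allP aok g gF.
    by rewrite mem_glines => /orP[]/eqP->.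
  have hgE : {subset map gh F <= E}.
    by move=> x /mapP[g gF ->]; have /and5P[-> _ _ _ _] := allP aok g gF.
  have s1 := count_mem_sub hLu ul usedL.
  have s2 := count_mem_sub hEu uh hgE.
  rewrite !size_cat size_flatten_map2 /PL /PE !size_map !size_filter -/used.
  move: s1 s2; rewrite size_map.
  move: (count _ L) (count _ E) (size used) (size F) (size L) (size E) => p q r z t u.
  clear; lia.
- move=> g gF sg; by rewrite mem_undup mem_cat inPF // mem_glines eqxx.
Qed.
End Abs.

Lemma count1_eq (T : eqType) (p : pred T) (s : seq T) x y :
  count p s = 1%N -> x \in s -> p x -> y \in s -> p y -> x = y.
Proof.
move=> c1 xs px ys py; apply/eqP; apply/negP => nxy.
have := count_predUI (predI p (pred1 x)) (predI p (pred1 y)) s.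
have -> : count (predI (predI p (pred1 x)) (predI p (pred1 y))) s = 0%N.
  apply/eqP; rewrite -leqn0 leqNgt -has_count; apply/hasPn => z _ /=.
  by apply/negP => /andP[/andP[_ /eqP ->] /andP[_ /eqP e]]; rewrite e eqxx in nxy.
have h1 : (0 < count (predI p (pred1 x)) s)%N by rewrite -has_count; apply/hasP; exists x; rewrite //= px eqxx.
have h2 : (0 < count (predI p (pred1 y)) s)%N by rewrite -has_count; apply/hasP; exists y; rewrite //= py eqxx.
have h3 : (count (predU (predI p (pred1 x)) (predI p (pred1 y))) s <= count p s)%N.
  by apply: sub_count => z /= /orP[] /andP[].
move: h1 h2 h3; rewrite c1.
move: (count _ s) (count _ s) (count _ s) => a b c; clear; lia.
Qed.

Section Tr.
Variable R : realFieldType.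
Variable Rs : seq (ray R).
Hypothesis hR : good_rays Rs.

Definition lray b := nth (false, 0, 0) Rs (find (fun r => (rheight r == b) && ~~ rdir r) Rs).
Definition rray b := nth (false, 0, 0) Rs (find (fun r => (rheight r == b) && rdir r) Rs).
Definition hiR b := ranchor (lray b).
Definition loR b := ranchor (rray b).

Lemma segE b : b \in seg_heights Rs -> exists2 r, r \in Rs & rheight r = b.
Proof. by rewrite /seg_heights mem_undup => /mapP[r rR ->]; exists r. Qed.

Lemma lray_spec b : b \in seg_heights Rs -> [/\ lray b \in Rs, rheight (lray b) = b & ~~ rdir (lray b)].
Proof.
move=> /segE[r rR hr]; case: hR => _ [hc _]; have [c1 _] := hc r rR.
have hs : has (fun r => (rheight r == b) && ~~ rdir r) Rs.
  by rewrite has_count -hr c1.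
have := nth_find (false, 0, 0) hs => /andP[/eqP e d]; split => //.
by apply: mem_nth; rewrite -has_find.
Qed.

Lemma rray_spec b : b \in seg_heights Rs -> [/\ rray b \in Rs, rheight (rray b) = b & rdir (rray b)].
Proof.
move=> /segE[r rR hr]; case: hR => _ [hc _]; have [_ c1] := hc r rR.
have hs : has (fun r => (rheight r == b) && rdir r) Rs.
  by rewrite has_count -hr c1.
have := nth_find (false, 0, 0) hs => /andP[/eqP e d]; split => //.
by apply: mem_nth; rewrite -has_find.
Qed.

Lemma lray_uniq b r : b \in seg_heights Rs -> r \in Rs -> rheight r = b -> ~~ rdir r -> r = lray b.
Proof.
move=> bE rR hr dr; have [l1 l2 l3] := lray_spec bE.
case: hR => _ [hc _]; have [c1 _] := hc r rR.
apply: (count1_eq c1) => //=; by rewrite ?hr ?l2 eqxx.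
Qed.

Lemma rray_uniq b r : b \in seg_heights Rs -> r \in Rs -> rheight r = b -> rdir r -> r = rray b.
Proof.
move=> bE rR hr dr; have [l1 l2 l3] := rray_spec bE.
case: hR => _ [hc _]; have [_ c1] := hc r rR.
apply: (count1_eq c1) => //=; by rewrite ?hr ?l2 eqxx.
Qed.

Lemma lohiR b : b \in seg_heights Rs -> loR b <= hiR b.
Proof.
move=> bE; have [l1 l2 l3] := lray_spec bE; have [r1 r2 r3] := rray_spec bE.
case: hR => _ [_ hp]; have [p /andP[h1 h2]] := hp _ _ l1 r1 (etrans l2 (esym r2)) l3 r3.
move: h1 h2; rewrite /on_ray (negbTE l3) r3 => /andP[_ a1] /andP[_ a2].
rewrite /loR /hiR; exact: le_trans a2 a1.
Qed.

Lemma on_segP b (p : point R) : on_seg Rs b p <->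
  [&& b \in seg_heights Rs, p.2 == b, loR b <= p.1 & p.1 <= hiR b].
Proof.
split.
  move=> [rl [rr [rlR rrR hl hr /and4P[dl dr ol or]]]].
  have bE : b \in seg_heights Rs by rewrite /seg_heights mem_undup -hl map_f.
  have el := lray_uniq bE rlR hl dl; have er := rray_uniq bE rrR hr dr.
  move: ol or; rewrite /on_ray (negbTE dl) dr hl => /andP[-> h1] /andP[_ h2].
  by rewrite bE /loR /hiR -el -er h1 h2.
case/and4P => bE pb h1 h2; have [l1 l2 l3] := lray_spec bE; have [r1 r2 r3] := rray_spec bE.
exists (lray b), (rray b); split => //.
by rewrite l3 r3 /on_ray (negbTE l3) r3 l2 r2 pb h1 h2.
Qed.

Lemma hittingP (L : seq R) (Q : seq (point R)) :
  hitting L Rs Q <-> hitA L (seg_heights Rs) loR hiR Q.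
Proof.
split.
  move=> [hl hr]; split.
    by move=> a aL; have [p pQ /eqP e] := hl a aL; exists p.
  move=> b bE; have [l1 l2 l3] := lray_spec bE; have [r1 r2 r3] := rray_spec bE.
  split.
    have [p pQ] := hr _ l1; rewrite /on_ray (negbTE l3) l2 => h; by exists p.
  have [p pQ] := hr _ r1; rewrite /on_ray r3 r2 => h; by exists p.
move=> [hl hr]; split.
  by move=> a aL; have [p pQ e] := hl a aL; exists p; rewrite // /on_vline e.
move=> r rR.
have bE : rheight r \in seg_heights Rs by rewrite /seg_heights mem_undup map_f.
have [[p1 p1Q h1] [p2 p2Q h2]] := hr _ bE.
case: (boolP (rdir r)) => d.
  exists p2 => //; rewrite (rray_uniq bE rR erefl d).
  have [_ r2 r3] := rray_spec bE; by rewrite /on_ray r3 r2.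
exists p1 => //; rewrite (lray_uniq bE rR erefl d).
have [_ l2 l3] := lray_spec bE; by rewrite /on_ray (negbTE l3) l2.
Qed.

End Tr.

Unset Implicit Arguments.
Set Strict Implicit.

Theorem mainTheorem7 (R : realFieldType) (L : seq R) (Rs : seq (ray R)) (m : nat)
  (hL : uniq L) (hR : good_rays Rs) (hm : max_matching_size L Rs m) :
  exists P : seq (point R), min_hitting L Rs P /\
  exists T : seq (point R * R * R),
    [/\ size T = m,
        uniq [seq t.1.1 | t <- T],
        uniq [seq t.1.2 | t <- T],
        uniq [seq t.2 | t <- T] &
        forall t, t \in T ->
          [/\ t.1.1 \in P, t.1.2 \in L, t.2 \in seg_heights Rs,
              on_vline t.1.2 t.1.1 & on_seg Rs t.2 t.1.1]].
Proof.
set E := seg_heights Rs.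
have uE : uniq E by apply: undup_uniq.
have hlh : forall b, b \in E -> loR Rs b <= hiR Rs b.
  by move=> b hb; exact: (lohiR hR hb).
have [P0 [uP0 hP0 _ _]] := upper hlh hL uE (valid_nil L E (loR Rs) (hiR Rs)).
have hP0' : hitting L Rs P0 by apply/hittingP.
have [k [[Q0 [uQ0 hQ0 sQ0]] kmin]] :=
  classic_min (P := fun n => exists Q, [/\ uniq Q, hitting L Rs Q & size Q = n]) (n := size P0)
    (ex_intro _ P0 (And3 uP0 hP0' erefl)).
have [F0 [vF0 sF0]] := lower hL uE uQ0 (proj1 (hittingP hR L Q0) hQ0).
case: hm => [[M [[hM [uM1 uM2]] szM]] _].
have hMa : forall ab, ab \in M -> adj L E (loR Rs) (hiR Rs) ab.1 ab.2.
  move=> ab abM; have [h1 h2 [p [/eqP e hs]]] := hM ab abM.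
  have /and4P[_ pb l1 l2] := proj1 (on_segP hR _ _) hs.
  by rewrite /adj h1 h2 -e l1 l2.
have [F1 [vF1 sF1 nF1]] := improve_all hlh uE vF0 hMa uM1 uM2.
have [P [uP hP sP singP]] := upper hlh hL uE vF1.
exists P; split.
  split => //; first by apply/hittingP.
  move=> Q uQ hQ; have := kmin (size Q) (ex_intro _ Q (And3 uQ hQ erefl)).
  rewrite -sQ0 => h; move: sF0 sF1 sP h.
  move: (size L) (size E) (size Q0) (size F0) (size F1) (size P) (size Q) => a b c d e f g.
  clear; lia.
pose S := filter (@single R) F1.
pose T := take m [seq ((@gu R g, @gh R g), @gu R g, @gh R g) | g <- S].
have szS : (m <= size S)%N by rewrite size_filter -szM.
have vS := valid_filter (@single R) vF1.
case/and3P: (vS) => okS uhS ulS.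
have ulS' : uniq (map (@gu R) S).
  move: ulS; have -> : [seq glines i | i <- S] = [seq [:: @gu R g] | g <- S].
    by apply/eq_in_map => g; rewrite mem_filter => /andP[sg _]; rewrite glines_single.
  by rewrite flatten_map1.
exists T; split.
- by rewrite size_take size_map; move: szS; case: ltnP => //; move: (size S) => z; clear; lia.
- rewrite /T map_take -map_comp; apply: take_uniq.
  apply: (@map_uniq _ _ snd); rewrite -map_comp; exact: uhS.
- rewrite /T map_take -map_comp; apply: take_uniq; exact: ulS'.
- rewrite /T map_take -map_comp; apply: take_uniq; exact: uhS.
- move=> t /mem_take /mapP[g]; rewrite mem_filter => /andP[sg gF] -> /=.
  have /and5P[gE guL _ h1 h2] := valid_gok vF1 gF.
  split => //.
  + exact: singP.
  + by rewrite /on_vline eqxx.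
  + apply/on_segP => //; rewrite gE eqxx /= h1 andbT.
    by move: h2; rewrite -(eqP sg).
Qed.
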